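(* For each $n\ge1$ let $V_n\gamma$ be the functor from the category of double categories and double functors to $\mathbf{Cat}$ sending $C$ to $V^{\gamma C}_n$ and $F$ to the restriction of $(\gamma F)_1$ to $V^{\gamma C}_n$, and for $m\le n$ let $\eta_{m,n}:V_m\gamma\Rightarrow V_n\gamma$ be the natural transformation given by the inclusions $V^{\gamma C}_m\subseteq V^{\gamma C}_n$. Then the functor $\gamma_1=\pi_1\gamma$, sending $C$ to the morphism category $(\gamma C)_1$ and $F$ to $(\gamma F)_1$, is the colimit $\varinjlim_n V_n\gamma$ of this diagram (with the inclusions $V^{\gamma C}_n\subseteq(\gamma C)_1$ as colimit cocone).
   Context: Double categories and double functors are not assumed strict. $C_0$: objects and vertical morphisms; $C_1$: horizontal morphisms and 2-morphisms. A 2-morphism is globular if its source and target are identity vertical morphisms; unitor/associator components are globular. The globularily generated piece $\gamma C$ is the smallest sub-double category of $C$ containing all objects, vertical morphisms, horizontal morphisms and globular 2-morphisms of $C$; for a double functor $F:C\to D$, $\gamma F:\gamma C\to\gamma D$ is its restriction. For a double category $E$: $H^E_1$ is the collection of globular 2-morphisms and horizontal identities of vertical morphisms; $V^E_1$ is the subcategory of $E_1$ generated by $H^E_1$ under vertical composition; for $n>1$, $H^E_n$ is the collection of all horizontal composites (any parenthesization) of composable finite sequences of morphisms of $V^E_{n-1}$, and $V^E_n$ is the subcategory of $E_1$ generated by $H^E_n$. The morphism projection $\pi_1$ sends a double category to its morphism category $C_1$ and a double functor to its morphism functor $F_1$. Double functors between globularily generated double categories map $V^C_n$ into $V^D_n$.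 *)

(* Defs.v *)
From Stdlib Require Import Arith ClassicalEpsilon ProofIrrelevance.

Record Cat := mkCat {
  ob : Type; mor : Type;
  dom : mor -> ob; cod : mor -> ob;
  idm : ob -> mor;
  comp : mor -> mor -> mor;            (* comp g f = g o f, meaningful when cod f = dom g *)
  dom_idm : forall a, dom (idm a) = a;
  cod_idm : forall a, cod (idm a) = a;
  dom_comp : forall g f, cod f = dom g -> dom (comp g f) = dom f;
  cod_comp : forall g f, cod f = dom g -> cod (comp g f) = cod g;
  comp_idl : forall f, comp (idm (cod f)) f = f;
  comp_idr : forall f, comp f (idm (dom f)) = f;
  comp_assoc : forall h g f, cod f = dom g -> cod g = dom h ->
      comp h (comp g f) = comp (comp h g) f }.
Arguments dom {_} _. Arguments cod {_} _. Arguments idm {_} _. Arguments comp {_} _ _.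

Record Functor (A B : Cat) := mkFunctor {
  fob : ob A -> ob B; fmor : mor A -> mor B;
  fdom : forall f, dom (fmor f) = fob (dom f);
  fcod : forall f, cod (fmor f) = fob (cod f);
  fidm : forall a, fmor (idm a) = idm (fob a);
  fcomp_ax : forall g f, cod f = dom g -> fmor (comp g f) = comp (fmor g) (fmor f) }.
Arguments fob {_ _} _ _. Arguments fmor {_ _} _ _.

Definition Fid (A : Cat) : Functor A A.
Proof.
  refine (mkFunctor A A (fun a => a) (fun f => f) _ _ _ _); reflexivity.
Defined.

Definition Fcomp {A B C : Cat} (G : Functor B C) (F : Functor A B) : Functor A C.
Proof.
  refine (mkFunctor A C (fun a => fob G (fob F a)) (fun f => fmor G (fmor F f)) _ _ _ _).
  - intro f; now rewrite fdom, fdom.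
  - intro f; now rewrite fcod, fcod.
  - intro a; now rewrite fidm, fidm.
  - intros g f e. rewrite fcomp_ax by exact e. apply fcomp_ax.
    now rewrite fcod, fdom, e.
Defined.

Definition feq {A B : Cat} (F G : Functor A B) : Prop :=
  (forall a, fob F a = fob G a) /\ (forall f, fmor F f = fmor G f).

Definition is_iso (A : Cat) (f : mor A) : Prop :=
  exists g, dom g = cod f /\ cod g = dom f /\ comp g f = idm (dom f) /\ comp f g = idm (cod f).

Definition is_identity (A : Cat) (f : mor A) : Prop := f = idm (dom f).

Section Sub.
Variables (A : Cat) (P : mor A -> Prop)
  (hid : forall a, P (idm a))
  (hc : forall g f, cod f = dom g -> P f -> P g -> P (comp g f)).

Definition sub_comp (g f : {m | P m}) : {m | P m} :=
  match excluded_middle_informative (cod (proj1_sig f) = dom (proj1_sig g)) with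
  | left e => exist _ (comp (proj1_sig g) (proj1_sig f)) (hc _ _ e (proj2_sig f) (proj2_sig g))
  | right _ => f
  end.

Lemma sub_comp_eq g f : cod (proj1_sig f) = dom (proj1_sig g) ->
  proj1_sig (sub_comp g f) = comp (proj1_sig g) (proj1_sig f).
Proof.
  intro e; unfold sub_comp; destruct excluded_middle_informative; [reflexivity|contradiction].
Qed.

Lemma sub_eq (x y : {m | P m}) : proj1_sig x = proj1_sig y -> x = y.
Proof.
  destruct x as [x px], y as [y py]; simpl; intros ->; f_equal; apply proof_irrelevance.
Qed.

Definition Sub : Cat.
Proof.
  refine (mkCat (ob A) {m | P m} (fun f => dom (proj1_sig f)) (fun f => cod (proj1_sig f))
            (fun a => exist _ (idm a) (hid a)) sub_comp _ _ _ _ _ _ _).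
  - intro a; apply dom_idm.
  - intro a; apply cod_idm.
  - intros g f e; rewrite sub_comp_eq by exact e; now apply dom_comp.
  - intros g f e; rewrite sub_comp_eq by exact e; now apply cod_comp.
  - intro f; apply sub_eq; rewrite sub_comp_eq; simpl.
    + apply comp_idl.
    + now rewrite dom_idm.
  - intro f; apply sub_eq; rewrite sub_comp_eq; simpl.
    + apply comp_idr.
    + now rewrite cod_idm.
  - intros h g f e1 e2; apply sub_eq.
    rewrite sub_comp_eq, sub_comp_eq, sub_comp_eq, sub_comp_eq; auto.
    + now apply comp_assoc.
    + rewrite sub_comp_eq by exact e2; now rewrite dom_comp.
    + rewrite sub_comp_eq by exact e1; now rewrite cod_comp.
Defined.
End Sub.

(* C0 : objects and vertical morphisms; C1 : horizontal morphisms and 2-morphisms.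
   hco x y / hcm a b : horizontal composite "x then y" (defined when T x = S y). *)
Record DblCat := mkDbl {
  C0 : Cat; C1 : Cat;
  Sf : Functor C1 C0; Tf : Functor C1 C0; Uf : Functor C0 C1;
  SU_ob : forall a, fob Sf (fob Uf a) = a;
  SU_mor : forall v, fmor Sf (fmor Uf v) = v;
  TU_ob : forall a, fob Tf (fob Uf a) = a;
  TU_mor : forall v, fmor Tf (fmor Uf v) = v;
  hco : ob C1 -> ob C1 -> ob C1;
  hcm : mor C1 -> mor C1 -> mor C1;
  hco_S : forall x y, fob Tf x = fob Sf y -> fob Sf (hco x y) = fob Sf x;
  hco_T : forall x y, fob Tf x = fob Sf y -> fob Tf (hco x y) = fob Tf y;
  hcm_dom : forall a b, fmor Tf a = fmor Sf b -> dom (hcm a b) = hco (dom a) (dom b);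
  hcm_cod : forall a b, fmor Tf a = fmor Sf b -> cod (hcm a b) = hco (cod a) (cod b);
  hcm_S : forall a b, fmor Tf a = fmor Sf b -> fmor Sf (hcm a b) = fmor Sf a;
  hcm_T : forall a b, fmor Tf a = fmor Sf b -> fmor Tf (hcm a b) = fmor Tf b;
  hcm_id : forall x y, fob Tf x = fob Sf y -> hcm (idm x) (idm y) = idm (hco x y);
  hcm_comp : forall a a' b b', cod a = dom a' -> cod b = dom b' ->
      fmor Tf a = fmor Sf b -> fmor Tf a' = fmor Sf b' ->
      hcm (comp a' a) (comp b' b) = comp (hcm a' b') (hcm a b);
  assoc : ob C1 -> ob C1 -> ob C1 -> mor C1;
  assoc_dom : forall x y z, fob Tf x = fob Sf y -> fob Tf y = fob Sf z ->
      dom (assoc x y z) = hco (hco x y) z;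
  assoc_cod : forall x y z, fob Tf x = fob Sf y -> fob Tf y = fob Sf z ->
      cod (assoc x y z) = hco x (hco y z);
  assoc_glob : forall x y z, fob Tf x = fob Sf y -> fob Tf y = fob Sf z ->
      is_identity C0 (fmor Sf (assoc x y z)) /\ is_identity C0 (fmor Tf (assoc x y z));
  assoc_iso : forall x y z, fob Tf x = fob Sf y -> fob Tf y = fob Sf z ->
      is_iso C1 (assoc x y z);
  assoc_nat : forall a b c, fmor Tf a = fmor Sf b -> fmor Tf b = fmor Sf c ->
      comp (hcm a (hcm b c)) (assoc (dom a) (dom b) (dom c))
      = comp (assoc (cod a) (cod b) (cod c)) (hcm (hcm a b) c);
  lunit : ob C1 -> mor C1;
  lunit_dom : forall x, dom (lunit x) = hco (fob Uf (fob Sf x)) x;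
  lunit_cod : forall x, cod (lunit x) = x;
  lunit_glob : forall x, is_identity C0 (fmor Sf (lunit x)) /\ is_identity C0 (fmor Tf (lunit x));
  lunit_iso : forall x, is_iso C1 (lunit x);
  lunit_nat : forall a,
      comp a (lunit (dom a)) = comp (lunit (cod a)) (hcm (fmor Uf (fmor Sf a)) a);
  runit : ob C1 -> mor C1;
  runit_dom : forall x, dom (runit x) = hco x (fob Uf (fob Tf x));
  runit_cod : forall x, cod (runit x) = x;
  runit_glob : forall x, is_identity C0 (fmor Sf (runit x)) /\ is_identity C0 (fmor Tf (runit x));
  runit_iso : forall x, is_iso C1 (runit x);
  runit_nat : forall a,
      comp a (runit (dom a)) = comp (runit (cod a)) (hcm a (fmor Uf (fmor Tf a)));
  pentagon : forall w x y z, fob Tf w = fob Sf x -> fob Tf x = fob Sf y -> fob Tf y = fob Sf z ->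
      comp (assoc w x (hco y z)) (assoc (hco w x) y z)
      = comp (hcm (idm w) (assoc x y z))
             (comp (assoc w (hco x y) z) (hcm (assoc w x y) (idm z)));
  triangle : forall x y, fob Tf x = fob Sf y ->
      comp (hcm (idm x) (lunit y)) (assoc x (fob Uf (fob Tf x)) y) = hcm (runit x) (idm y)
}.
Arguments Sf {_}. Arguments Tf {_}. Arguments Uf {_}.
Arguments hco {_} _ _. Arguments hcm {_} _ _. Arguments assoc {_} _ _ _.
Arguments lunit {_} _. Arguments runit {_} _.

Record DFun (C D : DblCat) := mkDFun {
  F0 : Functor (C0 C) (C0 D);
  F1 : Functor (C1 C) (C1 D);
  phi : ob (C1 C) -> ob (C1 C) -> mor (C1 D);     (* F x . F y => F (x . y) *)
  phiU : ob (C0 C) -> mor (C1 D)                  (* U (F a) => F (U a) *)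
}.
Arguments F0 {_ _} _. Arguments F1 {_ _} _. Arguments phi {_ _} _ _ _. Arguments phiU {_ _} _ _.

Definition globular (C : DblCat) (a : mor (C1 C)) : Prop :=
  is_identity (C0 C) (fmor Sf a) /\ is_identity (C0 C) (fmor Tf a).

Record IsDblFunctor {C D : DblCat} (F : DFun C D) : Prop := {
  dS_ob : forall x, fob Sf (fob (F1 F) x) = fob (F0 F) (fob Sf x);
  dS_mor : forall a, fmor Sf (fmor (F1 F) a) = fmor (F0 F) (fmor Sf a);
  dT_ob : forall x, fob Tf (fob (F1 F) x) = fob (F0 F) (fob Tf x);
  dT_mor : forall a, fmor Tf (fmor (F1 F) a) = fmor (F0 F) (fmor Tf a);
  phi_dom : forall x y, fob Tf x = fob Sf y ->
      dom (phi F x y) = hco (fob (F1 F) x) (fob (F1 F) y);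
  phi_cod : forall x y, fob Tf x = fob Sf y -> cod (phi F x y) = fob (F1 F) (hco x y);
  phi_glob : forall x y, fob Tf x = fob Sf y -> globular D (phi F x y);
  phi_iso : forall x y, fob Tf x = fob Sf y -> is_iso (C1 D) (phi F x y);
  phi_nat : forall a b, fmor Tf a = fmor Sf b ->
      comp (fmor (F1 F) (hcm a b)) (phi F (dom a) (dom b))
      = comp (phi F (cod a) (cod b)) (hcm (fmor (F1 F) a) (fmor (F1 F) b));
  phiU_dom : forall a, dom (phiU F a) = fob Uf (fob (F0 F) a);
  phiU_cod : forall a, cod (phiU F a) = fob (F1 F) (fob Uf a);
  phiU_glob : forall a, globular D (phiU F a);
  phiU_iso : forall a, is_iso (C1 D) (phiU F a);
  phiU_nat : forall v,
      comp (fmor (F1 F) (fmor Uf v)) (phiU F (dom v))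
      = comp (phiU F (cod v)) (fmor Uf (fmor (F0 F) v));
  coh_assoc : forall x y z, fob Tf x = fob Sf y -> fob Tf y = fob Sf z ->
      comp (fmor (F1 F) (assoc x y z))
           (comp (phi F (hco x y) z) (hcm (phi F x y) (idm (fob (F1 F) z))))
      = comp (phi F x (hco y z))
           (comp (hcm (idm (fob (F1 F) x)) (phi F y z))
                 (assoc (fob (F1 F) x) (fob (F1 F) y) (fob (F1 F) z)));
  coh_lunit : forall x,
      comp (fmor (F1 F) (lunit x))
           (comp (phi F (fob Uf (fob Sf x)) x) (hcm (phiU F (fob Sf x)) (idm (fob (F1 F) x))))
      = lunit (fob (F1 F) x);
  coh_runit : forall x,
      comp (fmor (F1 F) (runit x))
           (comp (phi F x (fob Uf (fob Tf x))) (hcm (idm (fob (F1 F) x)) (phiU F (fob Tf x))))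
      = runit (fob (F1 F) x)
}.

Definition dfid (C : DblCat) : DFun C C :=
  mkDFun C C (Fid _) (Fid _) (fun x y => idm (hco x y)) (fun a => idm (fob Uf a)).

Definition dfcomp {C D E : DblCat} (G : DFun D E) (F : DFun C D) : DFun C E :=
  mkDFun C E (Fcomp (F0 G) (F0 F)) (Fcomp (F1 G) (F1 F))
    (fun x y => comp (fmor (F1 G) (phi F x y)) (phi G (fob (F1 F) x) (fob (F1 F) y)))
    (fun a => comp (fmor (F1 G) (phiU F a)) (phiU G (fob (F0 F) a))).

Record DblToCat := mkDblToCat {
  Gob : DblCat -> Cat;
  Gmor : forall (C D : DblCat) (F : DFun C D), IsDblFunctor F -> Functor (Gob C) (Gob D);
  Gmor_id : forall C (p : IsDblFunctor (dfid C)), feq (Gmor C C (dfid C) p) (Fid (Gob C));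
  Gmor_comp : forall C D E (F : DFun C D) (H : DFun D E) pF pH pHF,
      feq (Gmor C E (dfcomp H F) pHF) (Fcomp (Gmor D E H pH) (Gmor C D F pF))
}.
Arguments Gmor _ {_ _} _ _.

Inductive gen (A : Cat) (P : mor A -> Prop) : mor A -> Prop :=
| gen_base : forall f, P f -> gen A P f
| gen_id : forall a, gen A P (idm a)
| gen_comp : forall g f, cod f = dom g -> gen A P f -> gen A P g -> gen A P (comp g f).

(* horizontal composites (any parenthesization) of nonempty composable
   finite sequences of 2-morphisms satisfying P *)
Inductive hcl (C : DblCat) (P : mor (C1 C) -> Prop) : mor (C1 C) -> Prop :=
| hcl_base : forall a, P a -> hcl C P a
| hcl_comp : forall a b, fmor Tf a = fmor Sf b -> hcl C P a -> hcl C P b -> hcl C P (hcm a b).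

(* 2-morphisms of the globularily generated piece gamma C (smallest sub-double
   category containing all objects, vertical and horizontal morphisms, and
   globular 2-morphisms) *)
Inductive gam (C : DblCat) : mor (C1 C) -> Prop :=
| gam_glob : forall a, globular C a -> gam C a
| gam_U : forall v, gam C (fmor Uf v)
| gam_id : forall x, gam C (idm x)
| gam_vcomp : forall b a, cod a = dom b -> gam C a -> gam C b -> gam C (comp b a)
| gam_hcomp : forall a b, fmor Tf a = fmor Sf b -> gam C a -> gam C b -> gam C (hcm a b).

Definition H1 (C : DblCat) (a : mor (C1 C)) : Prop :=
  globular C a \/ exists v, a = fmor Uf v.

(* Vn C n = V_n (n >= 1; the value at n = 0 is an unused dummy equal to V_1) *)
Fixpoint Vn (C : DblCat) (n : nat) : mor (C1 C) -> Prop :=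
  match n with
  | 0 => gen (C1 C) (H1 C)
  | S k => match k with
           | 0 => gen (C1 C) (H1 C)
           | S _ => gen (C1 C) (hcl C (Vn C k))
           end
  end.

Lemma Vn_id C n a : Vn C n (idm a).
Proof. destruct n as [|[|k]]; apply gen_id. Qed.

Lemma Vn_comp C n g f : cod f = dom g -> Vn C n f -> Vn C n g -> Vn C n (comp g f).
Proof. destruct n as [|[|k]]; simpl; intros; now apply gen_comp. Qed.

Definition SV (C : DblCat) (n : nat) : Cat := Sub (C1 C) (Vn C n) (Vn_id C n) (Vn_comp C n).
Definition Sg (C : DblCat) : Cat :=
  Sub (C1 C) (gam C) (gam_id C) (fun g f e hf hg => gam_vcomp C g f e hf hg).

(* lamn : V_n gamma => G is natural (V_n gamma acts on F by restricting F_1;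
   stated for all membership proofs, well-definedness is proved separately) *)
Definition NatV (G : DblToCat) (n : nat) (lamn : forall C, Functor (SV C n) (Gob G C)) : Prop :=
  forall (C D : DblCat) (F : DFun C D) (pF : IsDblFunctor F),
    (forall x : ob (C1 C), fob (Gmor G F pF) (fob (lamn C) x) = fob (lamn D) (fob (F1 F) x)) /\
    (forall a (h : Vn C n a) (h' : Vn D n (fmor (F1 F) a)),
       fmor (Gmor G F pF) (fmor (lamn C) (exist _ a h))
       = fmor (lamn D) (exist _ (fmor (F1 F) a) h')).

Definition NatG (G : DblToCat) (mu : forall C, Functor (Sg C) (Gob G C)) : Prop :=
  forall (C D : DblCat) (F : DFun C D) (pF : IsDblFunctor F),
    (forall x : ob (C1 C), fob (Gmor G F pF) (fob (mu C) x) = fob (mu D) (fob (F1 F) x)) /\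
    (forall a (h : gam C a) (h' : gam D (fmor (F1 F) a)),
       fmor (Gmor G F pF) (fmor (mu C) (exist _ a h))
       = fmor (mu D) (exist _ (fmor (F1 F) a) h')).

Definition Cocone (G : DblToCat) (lam : forall n C, Functor (SV C n) (Gob G C)) : Prop :=
  (forall n, 1 <= n -> NatV G n (lam n)) /\
  (forall m n, 1 <= m -> m <= n -> forall C : DblCat,
     (forall x : ob (C1 C), fob (lam m C) x = fob (lam n C) x) /\
     (forall a (h : Vn C m a) (h' : Vn C n a),
        fmor (lam m C) (exist _ a h) = fmor (lam n C) (exist _ a h'))).

Definition Factors (G : DblToCat) (lam : forall n C, Functor (SV C n) (Gob G C))
  (mu : forall C, Functor (Sg C) (Gob G C)) : Prop :=
  forall n, 1 <= n -> forall C : DblCat,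
    (forall x : ob (C1 C), fob (mu C) x = fob (lam n C) x) /\
    (forall a (h : Vn C n a) (h' : gam C a),
       fmor (mu C) (exist _ a h') = fmor (lam n C) (exist _ a h)).

(* Main.v *)
Require Import Defs.
From Stdlib Require Import Arith Lia ClassicalEpsilon ProofIrrelevance.

Lemma isid_dc (A : Cat) (u : mor A) : is_identity A u -> dom u = cod u.
Proof. unfold is_identity; intro H; rewrite H, dom_idm, cod_idm; reflexivity. Qed.

Lemma isid_l (A : Cat) (u x : mor A) : is_identity A u -> dom u = cod x -> comp u x = x.
Proof. intros H e; rewrite H, e; apply comp_idl. Qed.

Lemma isid_r (A : Cat) (w x : mor A) : is_identity A w -> cod w = dom x -> comp x w = x.
Proof. intros H e. rewrite H. rewrite (isid_dc A w H), e. apply comp_idr. Qed.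

Lemma isid_idm (A : Cat) a : is_identity A (idm a).
Proof. unfold is_identity; now rewrite dom_idm. Qed.

Lemma iso_cancel (A : Cat) (X f Y g : mor A) :
  comp X f = Y -> cod f = dom X -> comp f g = idm (cod f) -> cod g = dom f ->
  X = comp Y g.
Proof.
  intros E e1 e2 e3. subst Y. rewrite <- comp_assoc by auto.
  rewrite e2, e1. symmetry; apply comp_idr.
Qed.

Lemma glob_idm (C : DblCat) x : globular C (idm x).
Proof. split; rewrite fidm; apply isid_idm. Qed.

Lemma isid_fun {A B : Cat} (F : Functor A B) u : is_identity A u -> is_identity B (fmor F u).
Proof. unfold is_identity; intro H; rewrite H, fidm, dom_idm; reflexivity. Qed.

Lemma isid_comp (A : Cat) g f : is_identity A g -> is_identity A f -> cod f = dom g ->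
  is_identity A (comp g f).
Proof. intros Hg Hf e. rewrite isid_l; auto. Qed.

Lemma glob_comp (C : DblCat) g f : globular C g -> globular C f -> cod f = dom g ->
  globular C (comp g f).
Proof.
  intros [Hg1 Hg2] [Hf1 Hf2] e. split; rewrite fcomp_ax by exact e;
  apply isid_comp; auto; rewrite fcod, fdom; congruence.
Qed.

Lemma glob_hcm (C : DblCat) a b : globular C a -> globular C b -> fmor Tf a = fmor Sf b ->
  globular C (hcm a b).
Proof. intros [H1 _] [_ H2] e; split; [rewrite hcm_S|rewrite hcm_T]; auto. Qed.

Lemma glob_inv (C : DblCat) f g : globular C f -> cod f = dom g -> comp g f = idm (dom f) ->
  globular C g.
Proof.
  intros [H1 H2] e E.
  assert (K : forall (Fu : Functor (C1 C) (C0 C)), is_identity _ (fmor Fu f) -> is_identity _ (fmor Fu g)).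
  { intros Fu Hf. pose proof (f_equal (fmor Fu) E) as E'.
    rewrite fcomp_ax in E' by exact e. rewrite fidm in E'.
    rewrite isid_r in E' by (auto; rewrite fcod, fdom; congruence).
    rewrite E'; apply isid_idm. }
  split; auto.
Qed.

Lemma glob_F {C D : DblCat} (F : DFun C D) (pF : IsDblFunctor F) a :
  globular C a -> globular D (fmor (F1 F) a).
Proof.
  intros [H1 H2]; split; [rewrite (dS_mor F pF)|rewrite (dT_mor F pF)]; now apply isid_fun.
Qed.
Lemma F_U {C D : DblCat} (F : DFun C D) (pF : IsDblFunctor F) v :
  exists g, globular D g /\ cod g = dom (fmor Uf (fmor (F0 F) v)) /\
    cod (fmor Uf (fmor (F0 F) v)) = dom (phiU F (cod v)) /\
    fmor (F1 F) (fmor Uf v) = comp (comp (phiU F (cod v)) (fmor Uf (fmor (F0 F) v))) g.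
Proof.
  destruct (phiU_iso F pF (dom v)) as (g & e1 & e2 & e3 & e4).
  exists g. split; [|split; [|split]].
  - eapply glob_inv; [apply (phiU_glob F pF)| |exact e3]. auto.
  - rewrite e2, (phiU_dom F pF), fdom, fdom; reflexivity.
  - rewrite (phiU_dom F pF), fcod, fcod; reflexivity.
  - apply iso_cancel with (phiU F (dom v)); auto.
    + apply (phiU_nat F pF).
    + rewrite (phiU_cod F pF), fdom, fdom; reflexivity.
Qed.

Lemma F_hcm {C D : DblCat} (F : DFun C D) (pF : IsDblFunctor F) a b :
  fmor Tf a = fmor Sf b ->
  exists g, globular D g /\ fmor Tf (fmor (F1 F) a) = fmor Sf (fmor (F1 F) b) /\
    cod g = dom (hcm (fmor (F1 F) a) (fmor (F1 F) b)) /\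
    cod (hcm (fmor (F1 F) a) (fmor (F1 F) b)) = dom (phi F (cod a) (cod b)) /\
    fmor (F1 F) (hcm a b) = comp (comp (phi F (cod a) (cod b)) (hcm (fmor (F1 F) a) (fmor (F1 F) b))) g.
Proof.
  intro e.
  assert (eF : fmor Tf (fmor (F1 F) a) = fmor Sf (fmor (F1 F) b))
    by (rewrite (dT_mor F pF), (dS_mor F pF); congruence).
  assert (ed : fob Tf (dom a) = fob Sf (dom b)) by (rewrite <- !fdom; congruence).
  assert (ec : fob Tf (cod a) = fob Sf (cod b)) by (rewrite <- !fcod; congruence).
  destruct (phi_iso F pF _ _ ed) as (g & e1 & e2 & e3 & e4).
  exists g. split; [|split; [|split; [|split]]]; auto.
  - eapply glob_inv; [apply (phi_glob F pF); exact ed| |exact e3]. auto.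
  - rewrite e2, (phi_dom F pF) by exact ed. rewrite hcm_dom by exact eF. rewrite !fdom; reflexivity.
  - rewrite (phi_dom F pF) by exact ec. rewrite hcm_cod by exact eF. rewrite !fcod; reflexivity.
  - apply iso_cancel with (phi F (dom a) (dom b)); auto.
    + apply (phi_nat F pF); exact e.
    + rewrite (phi_cod F pF) by exact ed. rewrite fdom, hcm_dom by exact e; reflexivity.
Qed.
Ltac cd := repeat first [ rewrite dom_comp by cd | rewrite cod_comp by cd ]; congruence.

Lemma gam_F {C D : DblCat} (F : DFun C D) (pF : IsDblFunctor F) a :
  gam C a -> gam D (fmor (F1 F) a).
Proof.
  induction 1.
  - apply gam_glob; now apply glob_F.
  - destruct (F_U F pF v) as (g & Hg & e1 & e2 & ->).
    apply gam_vcomp; [cd| now apply gam_glob|].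
    apply gam_vcomp; auto using gam_U, gam_glob. apply gam_glob, (phiU_glob F pF).
  - rewrite fidm; apply gam_id.
  - rewrite fcomp_ax by exact H. apply gam_vcomp; auto. now rewrite fcod, fdom, H.
  - destruct (F_hcm F pF a b H) as (g & Hg & eF & e1 & e2 & ->).
    apply gam_vcomp; [cd| now apply gam_glob|].
    apply gam_vcomp; auto using gam_hcomp.
    apply gam_glob, (phi_glob F pF). rewrite <- !fcod; congruence.
Qed.

Definition Wrap (D : DblCat) (P : mor (C1 D) -> Prop) (x : mor (C1 D)) : Prop :=
  exists q h p, globular D q /\ globular D p /\ hcl D P h /\ cod p = dom h /\ cod h = dom q /\
    x = comp q (comp h p).

Lemma wrap_base D P x : P x -> Wrap D P x.
Proof.
  intro H. exists (idm (cod x)), x, (idm (dom x)).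
  split; [apply glob_idm|]. split; [apply glob_idm|]. split; [now apply hcl_base|].
  split; [now rewrite cod_idm|]. split; [now rewrite dom_idm|].
  now rewrite comp_idr, comp_idl.
Qed.

Lemma wrap_outer D P x q0 p0 : globular D q0 -> globular D p0 -> Wrap D P x ->
  cod x = dom q0 -> cod p0 = dom x -> Wrap D P (comp (comp q0 x) p0).
Proof.
  intros Hq0 Hp0 (q & h & p & Hq & Hp & Hh & e1 & e2 & ->) e3 e4.
  assert (f3 : cod q = dom q0) by (revert e3; cd).
  assert (f4 : cod p0 = dom p) by (revert e4; cd).
  exists (comp q0 q), h, (comp p p0).
  split; [apply glob_comp; auto|]. split; [apply glob_comp; auto|].
  split; [auto|]. split; [cd|]. split; [cd|].
  rewrite <- (comp_assoc _ q0 (comp q (comp h p)) p0) by cd.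
  rewrite <- (comp_assoc _ q (comp h p) p0) by cd.
  rewrite <- (comp_assoc _ h p p0) by cd.
  rewrite (comp_assoc _ q0 q (comp h (comp p p0))) by cd.
  reflexivity.
Qed.
Lemma F_wrap (D : DblCat) (Fu : Functor (C1 D) (C0 D)) q h p :
  is_identity _ (fmor Fu q) -> is_identity _ (fmor Fu p) -> cod p = dom h -> cod h = dom q ->
  fmor Fu (comp q (comp h p)) = fmor Fu h.
Proof.
  intros Hq Hp e1 e2.
  rewrite fcomp_ax by cd. rewrite (fcomp_ax _ _ Fu h p) by exact e1.
  rewrite (isid_r _ (fmor Fu p) (fmor Fu h)) by (auto; rewrite fcod, fdom; congruence).
  rewrite isid_l by (auto; rewrite fcod, fdom; congruence). reflexivity.
Qed.

Lemma F_wrap2 (D : DblCat) (Fu : Functor (C1 D) (C0 D)) h p :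
  is_identity _ (fmor Fu p) -> cod p = dom h -> fmor Fu (comp h p) = fmor Fu h.
Proof.
  intros Hp e1. rewrite fcomp_ax by exact e1.
  rewrite (isid_r _ (fmor Fu p) (fmor Fu h)) by (auto; rewrite fcod, fdom; congruence). reflexivity.
Qed.

Lemma wrap_hcm D P a b : Wrap D P a -> Wrap D P b -> fmor Tf a = fmor Sf b -> Wrap D P (hcm a b).
Proof.
  intros (q & h & p & [Hq1 Hq2] & [Hp1 Hp2] & Hh & e1 & e2 & ->)
         (q' & h' & p' & [Hq1' Hq2'] & [Hp1' Hp2'] & Hh' & e1' & e2' & ->) E.
  rewrite !F_wrap in E by auto.
  assert (Eq : fmor Tf q = fmor Sf q').
  { rewrite Hq2, Hq1', fdom, fdom, <- e2, <- e2', <- (fcod _ _ Tf h), <- (fcod _ _ Sf h'), E. reflexivity. }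
  assert (Ep : fmor Tf p = fmor Sf p').
  { rewrite Hp2, Hp1', (isid_dc _ _ Hp2), (isid_dc _ _ Hp1'), !fcod, e1, e1', <- (fdom _ _ Tf h), <- (fdom _ _ Sf h'), E.
    reflexivity. }
  assert (Ex : fmor Tf (comp h p) = fmor Sf (comp h' p')) by (rewrite !F_wrap2; auto).
  exists (hcm q q'), (hcm h h'), (hcm p p').
  split; [apply glob_hcm; try split; auto|].
  split; [apply glob_hcm; try split; auto|].
  split; [now apply hcl_comp|].
  split; [rewrite hcm_cod, hcm_dom by auto; congruence|].
  split; [rewrite hcm_cod, hcm_dom by auto; congruence|].
  rewrite hcm_comp by (auto; cd).
  rewrite hcm_comp by auto. reflexivity.
Qed.

Lemma wrap_gen D P x : (forall g, globular D g -> P g) -> Wrap D P x -> gen _ (hcl D P) x.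
Proof.
  intros HP (q & h & p & Hq & Hp & Hh & e1 & e2 & ->).
  apply gen_comp; [cd| |apply gen_base, hcl_base; auto].
  apply gen_comp; auto; apply gen_base; auto using hcl_base.
Qed.
Lemma glob_Vn C n a : globular C a -> Vn C n a.
Proof.
  intro H. induction n as [|[|k] IH].
  - apply gen_base; left; exact H.
  - apply gen_base; left; exact H.
  - apply gen_base, hcl_base, IH.
Qed.

Lemma V1_F {C D : DblCat} (F : DFun C D) (pF : IsDblFunctor F) a :
  gen _ (H1 C) a -> gen _ (H1 D) (fmor (F1 F) a).
Proof.
  induction 1 as [f [Hf|[v ->]]| |g f e _ IHf _ IHg].
  - apply gen_base; left; now apply glob_F.
  - destruct (F_U F pF v) as (g & Hg & e1 & e2 & ->).
    apply gen_comp; [cd| apply gen_base; now left|].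
    apply gen_comp; auto.
    + apply gen_base; right; eauto.
    + apply gen_base; left; apply (phiU_glob F pF).
  - rewrite fidm; apply gen_id.
  - rewrite fcomp_ax by exact e. apply gen_comp; auto. now rewrite fcod, fdom, e.
Qed.

Lemma Vn_F n : forall {C D : DblCat} (F : DFun C D) (pF : IsDblFunctor F) a,
  Vn C n a -> Vn D n (fmor (F1 F) a).
Proof.
  induction n as [|[|k] IH]; intros C D F pF a.
  - apply V1_F; auto.
  - apply V1_F; auto.
  - change (gen _ (hcl C (Vn C (S k))) a -> gen _ (hcl D (Vn D (S k))) (fmor (F1 F) a)).
    induction 1 as [f Hf| |g f e _ IHf _ IHg].
    + apply wrap_gen; [intros; now apply glob_Vn|].
      induction Hf as [a Ha|a b e Ha IHa Hb IHb].
      * apply wrap_base, IH; auto.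
      * destruct (F_hcm F pF a b e) as (g & Hg & eF & e1 & e2 & ->).
        apply wrap_outer; auto.
        -- apply (phi_glob F pF). rewrite <- !fcod; congruence.
        -- now apply wrap_hcm.
    + rewrite fidm; apply gen_id.
    + rewrite fcomp_ax by exact e. apply gen_comp; auto. now rewrite fcod, fdom, e.
Qed.

Lemma Vn_S C k a : Vn C (S k) a -> Vn C (S (S k)) a.
Proof. intro H. apply gen_base, hcl_base, H. Qed.

Lemma Vn_mono C m n a : 1 <= m -> m <= n -> Vn C m a -> Vn C n a.
Proof.
  intros Hm Hmn. induction Hmn; auto.
  intro H. destruct m0 as [|m0]; [lia|]. apply Vn_S; auto.
Qed.

Lemma Vn_gam C n a : Vn C n a -> gam C a.
Proof.
  revert a. induction n as [|[|k] IH]; intro a.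
  - induction 1 as [f [Hf|[v ->]]| |g f e _ IHf _ IHg]; auto using gam_glob, gam_U, gam_id, gam_vcomp.
  - induction 1 as [f [Hf|[v ->]]| |g f e _ IHf _ IHg]; auto using gam_glob, gam_U, gam_id, gam_vcomp.
  - change (gen _ (hcl C (Vn C (S k))) a -> gam C a).
    induction 1 as [f Hf| |g f e _ IHf _ IHg]; auto using gam_id, gam_vcomp.
    induction Hf; auto using gam_hcomp.
Qed.

Lemma gam_Vn C a : gam C a -> exists n, 1 <= n /\ Vn C n a.
Proof.
  induction 1 as [a Ha|v|x|b a e _ [n [Hn Ha]] _ [m [Hm Hb]]|a b e _ [n [Hn Ha]] _ [m [Hm Hb]]].
  - exists 1; split; auto. apply gen_base; now left.
  - exists 1; split; auto. apply gen_base; right; eauto.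
  - exists 1; split; auto. apply gen_id.
  - exists (max n m); split; [lia|]. apply Vn_comp; auto.
    + apply Vn_mono with n; auto; lia.
    + apply Vn_mono with m; auto; lia.
  - exists (S (S (max n m))); split; [lia|].
    change (gen _ (hcl C (Vn C (S (max n m)))) (hcm a b)).
    apply gen_base, hcl_comp; auto; apply hcl_base.
    + apply Vn_mono with n; auto; lia.
    + apply Vn_mono with m; auto; lia.
Qed.
Lemma lam_ob G lam (Hc : Cocone G lam) n C x : 1 <= n -> fob (lam n C) x = fob (lam 1 C) x.
Proof. intro Hn. destruct Hc as [_ HI]. symmetry; apply (HI 1 n); auto. Qed.

Lemma lam_indep G lam (Hc : Cocone G lam) n m C a (h : Vn C n a) (h' : Vn C m a) :
  1 <= n -> 1 <= m ->
  fmor (lam n C) (exist (Vn C n) a h) = fmor (lam m C) (exist (Vn C m) a h').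
Proof.
  intros Hn Hm. destruct Hc as [_ HI].
  assert (hN : Vn C (max n m) a) by (apply Vn_mono with n; auto; lia).
  transitivity (fmor (lam (max n m) C) (exist (Vn C (max n m)) a hN)).
  - apply (HI n (max n m)); auto; lia.
  - symmetry; apply (HI m (max n m)); auto; lia.
Qed.

Definition mumor (G : DblToCat) (lam : forall n C, Functor (SV C n) (Gob G C)) C (f : mor (Sg C)) : mor (Gob G C) :=
  match f with exist _ a h =>
    let s := constructive_indefinite_description _ (gam_Vn C a h) in
    fmor (lam (proj1_sig s) C) (exist (Vn C (proj1_sig s)) a (proj2 (proj2_sig s)))
  end.

Lemma mumor_eq G lam (Hc : Cocone G lam) C (f : mor (Sg C)) n (hv : Vn C n (proj1_sig f)) :
  1 <= n -> mumor G lam C f = fmor (lam n C) (exist (Vn C n) (proj1_sig f) hv).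
Proof.
  intro Hn. destruct f as [a h]. simpl.
  destruct (constructive_indefinite_description _ (gam_Vn C a h)) as [k [Hk Hv]]. simpl.
  apply lam_indep; auto.
Qed.

Definition mkmu G lam (Hc : Cocone G lam) C : Functor (Sg C) (Gob G C).
Proof.
  refine (mkFunctor (Sg C) (Gob G C) (fob (lam 1 C)) (mumor G lam C) _ _ _ _).
  - intros [a h]. destruct (gam_Vn C a h) as [n [Hn Hv]].
    rewrite (mumor_eq G lam Hc C (exist (fun m => gam C m) a h) n Hv Hn), fdom. simpl. apply (lam_ob G lam Hc); auto.
  - intros [a h]. destruct (gam_Vn C a h) as [n [Hn Hv]].
    rewrite (mumor_eq G lam Hc C (exist (fun m => gam C m) a h) n Hv Hn), fcod. simpl. apply (lam_ob G lam Hc); auto.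
  - intro x. rewrite (mumor_eq G lam Hc C (@idm (Sg C) x) 1 (Vn_id C 1 x)) by auto.
    exact (fidm _ _ (lam 1 C) x).
  - intros [b hb] [a ha] e. simpl in e.
    destruct (gam_Vn C a ha) as [n [Hn Ha]].
    destruct (gam_Vn C b hb) as [m [Hm Hb]].
    assert (Ha' : Vn C (max n m) a) by (apply Vn_mono with n; auto; lia).
    assert (Hb' : Vn C (max n m) b) by (apply Vn_mono with m; auto; lia).
    assert (Hab : Vn C (max n m) (proj1_sig (@comp (Sg C) (exist (fun m => gam C m) b hb) (exist (fun m => gam C m) a ha)))).
    { unfold Sg, Sub; simpl. rewrite sub_comp_eq by exact e. simpl. apply Vn_comp; auto. }
    rewrite (mumor_eq G lam Hc C _ _ Hab) by lia.
    rewrite (mumor_eq G lam Hc C (exist (fun m => gam C m) b hb) _ Hb') by lia.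
    rewrite (mumor_eq G lam Hc C (exist (fun m => gam C m) a ha) _ Ha') by lia.
    simpl. rewrite <- fcomp_ax by exact e.
    f_equal. apply sub_eq. simpl.
    unfold Sg, Sub in Hab |- *; simpl in Hab |- *.
    rewrite !sub_comp_eq by exact e. reflexivity.
Defined.
Lemma mkmu_mor G lam Hc C f : fmor (mkmu G lam Hc C) f = mumor G lam C f.
Proof. reflexivity. Qed.
Lemma mkmu_ob G lam Hc C x : fob (mkmu G lam Hc C) x = fob (lam 1 C) x.
Proof. reflexivity. Qed.

Theorem proposition5p2 :
  (* gamma_1 and V_n gamma are well defined on double functors *)
  (forall (C D : DblCat) (F : DFun C D), IsDblFunctor F ->
     forall a, gam C a -> gam D (fmor (F1 F) a)) /\
  (forall n, 1 <= n -> forall (C D : DblCat) (F : DFun C D), IsDblFunctor F ->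
     forall a, Vn C n a -> Vn D n (fmor (F1 F) a)) /\
  (* the inclusions eta_{m,n} and iota_n are well defined *)
  (forall m n, 1 <= m -> m <= n -> forall (C : DblCat) a, Vn C m a -> Vn C n a) /\
  (forall n, 1 <= n -> forall (C : DblCat) a, Vn C n a -> gam C a) /\
  (* universal property of the colimit, with cocone the inclusions iota_n *)
  (forall (G : DblToCat) (lam : forall n C, Functor (SV C n) (Gob G C)),
     Cocone G lam ->
     exists mu : forall C, Functor (Sg C) (Gob G C),
       NatG G mu /\ Factors G lam mu /\
       forall mu' : forall C, Functor (Sg C) (Gob G C),
         NatG G mu' -> Factors G lam mu' -> forall C, feq (mu' C) (mu C)).
Proof.
  split; [intros C D F pF a; now apply gam_F|].
  split; [intros n _ C D F pF a; now apply Vn_F|].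
  split; [intros m n Hm Hmn C a; now apply Vn_mono|].
  split; [intros n _ C a; apply Vn_gam|].
  intros G lam Hc. exists (mkmu G lam Hc).
  pose proof Hc as [HN HI].
  split; [|split].
  - intros C D F pF. split.
    + intro x. rewrite ?mkmu_ob. apply (HN 1); auto.
    + intros a h h'. rewrite !mkmu_mor.
      destruct (gam_Vn C a h) as [n [Hn Hv]].
      rewrite (mumor_eq G lam Hc C (exist (fun m => gam C m) a h) n Hv Hn).
      rewrite (mumor_eq G lam Hc D (exist (fun m => gam D m) (fmor (F1 F) a) h') n
                 (Vn_F n F pF a Hv) Hn).
      apply (HN n Hn).
  - intros n Hn C. split.
    + intro x. rewrite ?mkmu_ob. symmetry; apply (lam_ob G lam Hc); auto.
    + intros a h h'. rewrite mkmu_mor. apply (mumor_eq G lam Hc C (exist (fun m => gam C m) a h') n h Hn).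
  - intros mu' _ Hf C. split.
    + intro x. rewrite ?mkmu_ob. destruct (Hf 1 (le_n 1) C) as [H _]. apply H.
    + intros [a h]. rewrite mkmu_mor.
      destruct (gam_Vn C a h) as [n [Hn Hv]].
      rewrite (mumor_eq G lam Hc C (exist (fun m => gam C m) a h) n Hv Hn).
      destruct (Hf n Hn C) as [_ H]. apply H.
Qed.
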